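(* Let $\gamma>0$ and let $W\in\mathbb{R}^{\ell\times\ell}$ be symmetric positive definite. Define $$A_\gamma=\tilde A+\gamma B^TW^{-1}B,\qquad \mathcal A_\gamma=\begin{bmatrix}A_\gamma & B^T\\ B & 0\end{bmatrix},\qquad \mathcal P_\gamma=\begin{bmatrix}A_\gamma & B^T\\ 0 & -\tfrac1\gamma W\end{bmatrix}.$$ Then all eigenvalues of $\mathcal P_\gamma^{-1}\mathcal A_\gamma$ are real and positive, and $$\operatorname{Spec}(\mathcal P_\gamma^{-1}\mathcal A_\gamma)\subseteq[\eta,1],\qquad \eta:=\min_{x\in\mathcal S,\,x\neq 0}\frac{\gamma\, x^TB^TW^{-1}Bx}{x^T\tilde A x+\gamma\, x^TB^TW^{-1}Bx},$$ where $\mathcal S:=\{v\in\mathbb{R}^{n+m}:\ u^T\tilde A v=0 \text{ for all } u\in\ker(B)\}$. Moreover, $\lambda=1$ is an eigenvalue of $\mathcal P_\gamma^{-1}\mathcal A_\gamma$ of algebraic multiplicity at least $n+m$.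
   Context: Setting: $\Omega\subset\mathbb{R}^d$ ($d\in\{2,3\}$) is a bounded Lipschitz domain and $\Omega_2$ a Lipschitz subdomain with $\overline{\Omega_2}\subset\Omega$; $\beta,\beta_2$ are constants with $\beta_2>\beta>0$. Independent quasi-uniform quadrilateral/hexahedral meshes $\mathcal T_h$ of $\Omega$ (size $h_\Omega$) and $\mathcal T_{2,h}$ of $\Omega_2$ (size $h_{\Omega_2}$) are given, and $V_h\subset H^1_0(\Omega)$, $V_{2,h}\subset H^1(\Omega_2)$ are the continuous piecewise $\mathcal Q^1$ (degree at most one in each variable) Lagrange finite element spaces on these meshes, and the multiplier space is $\Lambda_h=V_{2,h}$ (more generally, any inf-sup stable choice). Bases: $\{\varphi_i\}_{i=1}^n$ of $V_h$, $\{\phi_j\}_{j=1}^m$ of $V_{2,h}$, $\{\psi_k\}_{k=1}^\ell$ of $\Lambda_h$. Matrices: $A\in\mathbb{R}^{n\times n}$, $A_{ij}=\int_\Omega\beta\nabla\varphi_i\cdot\nabla\varphi_j$; $A_2\in\mathbb{R}^{m\times m}$, $(A_2)_{ij}=\int_{\Omega_2}(\beta_2-\beta)\nabla\phi_i\cdot\nabla\phi_j$; $C\in\mathbb{R}^{\ell\times n}$, $C_{ki}=\int_{\Omega_2}\psi_k\varphi_i$; $C_2\in\mathbb{R}^{\ell\times m}$, $(C_2)_{kj}=\int_{\Omega_2}\psi_k\phi_j$. Set $B=[\,C\ \ -C_2\,]\in\mathbb{R}^{\ell\times(n+m)}$ and $\tilde A=\operatorname{diag}(A,A_2)$. Standing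 facts of this setting: $A$ is symmetric positive definite, $A_2$ is symmetric positive semidefinite with kernel spanned by the constant vector, $C$ has full row rank, $\ker(\tilde A)\cap\ker(B)=\{0\}$, and the saddle point matrix $\begin{bmatrix}\tilde A& B^T\\ B&0\end{bmatrix}$ is nonsingular (the discrete problem is uniquely solvable); consequently $A_\gamma$ is symmetric positive definite. *)

(* Defs.v *)
From HB Require Import structures.
From mathcomp Require Import all_boot all_order all_algebra.
From mathcomp Require Import complex.
Set Implicit Arguments. Unset Strict Implicit. Unset Printing Implicit Defensive.
Import Order.TTheory GRing.Theory Num.Theory.
Local Open Scope ring_scope.

Definition bform (R : pzRingType) (k : nat) (x : 'cV[R]_k) (M : 'M[R]_k) (y : 'cV[R]_k) : R :=
  (x^T *m M *m y) ord0 ord0.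

Definition sym_mx (R : pzRingType) (k : nat) (M : 'M[R]_k) : Prop := M^T = M.

Definition spd (R : numDomainType) (k : nat) (M : 'M[R]_k) : Prop :=
  sym_mx M /\ forall x : 'cV[R]_k, x != 0 -> 0 < bform x M x.

Definition spsd (R : numDomainType) (k : nat) (M : 'M[R]_k) : Prop :=
  sym_mx M /\ forall x : 'cV[R]_k, 0 <= bform x M x.

Definition Atilde (R : pzRingType) (n m : nat) (A : 'M[R]_n) (A2 : 'M[R]_m) : 'M[R]_(n + m) :=
  block_mx A 0 0 A2.

Definition Bmat (R : pzRingType) (n m l : nat) (C : 'M[R]_(l, n)) (C2 : 'M[R]_(l, m))
  : 'M[R]_(l, n + m) := row_mx C (- C2).

Definition Agamma (R : fieldType) (N l : nat) (At : 'M[R]_N) (B : 'M[R]_(l, N))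
  (W : 'M[R]_l) (gamma : R) : 'M[R]_N :=
  At + gamma *: (B^T *m invmx W *m B).

Definition calA (R : fieldType) (N l : nat) (At : 'M[R]_N) (B : 'M[R]_(l, N))
  (W : 'M[R]_l) (gamma : R) : 'M[R]_(N + l) :=
  block_mx (Agamma At B W gamma) B^T B 0.

Definition calP (R : fieldType) (N l : nat) (At : 'M[R]_N) (B : 'M[R]_(l, N))
  (W : 'M[R]_l) (gamma : R) : 'M[R]_(N + l) :=
  block_mx (Agamma At B W gamma) B^T 0 (- gamma^-1 *: W).

Definition inS (R : pzRingType) (N l : nat) (At : 'M[R]_N) (B : 'M[R]_(l, N)) (v : 'cV[R]_N) : Prop :=
  forall u : 'cV[R]_N, B *m u = 0 -> bform u At v = 0.

Definition eta_ratio (R : fieldType) (N l : nat) (At : 'M[R]_N) (B : 'M[R]_(l, N))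
  (W : 'M[R]_l) (gamma : R) (x : 'cV[R]_N) : R :=
  (gamma * bform x (B^T *m invmx W *m B) x) /
  (bform x At x + gamma * bform x (B^T *m invmx W *m B) x).

Definition is_eta (R : realFieldType) (N l : nat) (At : 'M[R]_N) (B : 'M[R]_(l, N))
  (W : 'M[R]_l) (gamma : R) (eta : R) : Prop :=
  (exists2 x : 'cV[R]_N, (inS At B x /\ x != 0) & eta_ratio At B W gamma x = eta) /\
  (forall x : 'cV[R]_N, inS At B x -> x != 0 -> eta <= eta_ratio At B W gamma x).

Definition cplx_mx (R : rcfType) (k : nat) (M : 'M[R]_k) : 'M[R[i]]_k :=
  map_mx (real_complex R) M.

(* Main.v *)
Require Import Defs.
From HB Require Import structures.
From mathcomp Require Import all_boot all_order all_algebra.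
From mathcomp Require Import complex.
From mathcomp Require Import ring lra.
Import Order.TTheory GRing.Theory Num.Theory.
Local Open Scope ring_scope.

Section Real.
Context {R : rcfType}.

Lemma bformD k (x y : 'cV[R]_k) M1 M2 : bform x (M1 + M2) y = bform x M1 y + bform x M2 y.
Proof. by rewrite /bform mulmxDr mulmxDl mxE. Qed.

Lemma bformZ k (x y : 'cV[R]_k) a M : bform x (a *: M) y = a * bform x M y.
Proof. by rewrite /bform -scalemxAr -scalemxAl mxE. Qed.

Lemma bformDl {k} (x1 x2 y : 'cV[R]_k) M : bform (x1 + x2) M y = bform x1 M y + bform x2 M y.
Proof. by rewrite /bform linearD /= !mulmxDl mxE. Qed.

Lemma bformDr {k} (x y1 y2 : 'cV[R]_k) M : bform x M (y1 + y2) = bform x M y1 + bform x M y2.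
Proof. by rewrite /bform mulmxDr mxE. Qed.

Lemma bformZl {k} (x y : 'cV[R]_k) a M : bform (a *: x) M y = a * bform x M y.
Proof. by rewrite /bform linearZ /= -!scalemxAl mxE. Qed.

Lemma bformZr {k} (x y : 'cV[R]_k) a M : bform x M (a *: y) = a * bform x M y.
Proof. by rewrite /bform -scalemxAr mxE. Qed.

Lemma bformM k p (x : 'cV[R]_k) (B : 'M[R]_(p, k)) S :
  bform x (B^T *m S *m B) x = bform (B *m x) S (B *m x).
Proof. by rewrite /bform trmx_mul !mulmxA. Qed.

Lemma bform_sym {k} (x y : 'cV[R]_k) M : sym_mx M -> bform x M y = bform y M x.
Proof.
move=> hM; have e : (x^T *m M *m y)^T = y^T *m M *m x.
  by rewrite !trmx_mul trmxK hM mulmxA.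
by rewrite /bform -e [RHS]mxE.
Qed.

Lemma bform0 {k} (M : 'M[R]_k) : bform 0 M 0 = 0.
Proof. by rewrite /bform mulmx0 mxE. Qed.

Lemma spd_unit {k} {M : 'M[R]_k} : spd M -> M \in unitmx.
Proof.
case=> _ hp; rewrite unitmxE unitfE; apply/negP => /det0P [v vn0 hv].
have := hp v^T; rewrite trmx_eq0 vn0 => /(_ isT).
by rewrite /bform trmxK hv mul0mx mxE ltxx.
Qed.

Lemma spd_inv {k} {W : 'M[R]_k} : spd W -> spd (invmx W).
Proof.
move=> hW; have hu := spd_unit hW; case: hW => hs hp; split.
  by rewrite /sym_mx trmx_inv hs.
move=> x xn0; set y := invmx W *m x.
have hx : x = W *m y by rewrite /y mulmxA mulmxV // mul1mx.
have yn0 : y != 0 by apply: contra xn0 => /eqP y0; rewrite hx y0 mulmx0.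
have := hp y yn0; congr (0 < _).
by rewrite /bform /y trmx_mul trmx_inv hs mulmxKV // mulmxA.
Qed.

Lemma spd_psd {k} (W : 'M[R]_k) : spd W -> forall x, 0 <= bform x W x.
Proof.
case=> _ hp x; have [->|xn0] := eqVneq x 0; first by rewrite bform0.
exact/ltW/hp.
Qed.

Lemma sumsq_eq0 {k} (y : 'cV[R]_k) : (y^T *m y) 0 0 = 0 -> y = 0.
Proof.
rewrite mxE => /eqP; rewrite psumr_eq0; last by move=> i _; rewrite !mxE -expr2 sqr_ge0.
move=> /allP h; apply/matrixP => i j; rewrite (ord1 j) mxE.
have := h i (mem_index_enum i); rewrite !mxE -expr2 sqrf_eq0 => /eqP //.
Qed.

Lemma psd_zero {k} (S : 'M[R]_k) (x : 'cV[R]_k) : sym_mx S ->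
  (forall z, 0 <= bform z S z) -> bform x S x = 0 -> S *m x = 0.
Proof.
move=> hs hp hx; set y := S *m x.
have hyx : bform y S x = (y^T *m y) 0 0 by rewrite /bform -mulmxA.
set b := bform y S x; set c := bform y S y.
have hc : 0 <= c by exact: hp.
have key t : 0 <= 2 * t * b + t ^+ 2 * c.
  have := hp (x + t *: y).
  rewrite bformDl !bformDr !bformZl !bformZr hx (bform_sym x y S hs) -/b -/c.
  move=> h; apply: le_trans h _; rewrite le_eqVlt; apply/orP; left; apply/eqP; ring.
have := key (- b / (c + 1)).
have c1 : 0 < c + 1 by lra.
move=> h.
have hb : b = 0.
  have h2 : 0 <= (2 * (- b / (c + 1)) * b + (- b / (c + 1)) ^+ 2 * c) * (c + 1) ^+ 2.
    by apply: mulr_ge0 => //; apply: exprn_ge0; lra.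
  have e : (2 * (- b / (c + 1)) * b + (- b / (c + 1)) ^+ 2 * c) * (c + 1) ^+ 2 = - (b ^+ 2 * (c + 2)).
    by field; rewrite gt_eqF.
  rewrite e oppr_ge0 in h2.
  have : 0 <= b ^+ 2 * (c + 2) by apply: mulr_ge0; [exact: sqr_ge0| lra].
  move=> h3; have : b ^+ 2 * (c + 2) = 0 by apply/eqP; rewrite eq_le h2 h3.
  by move/eqP; rewrite mulf_eq0 sqrf_eq0 => /orP [/eqP //|]; lra.
by apply: sumsq_eq0; rewrite -hyx.
Qed.

End Real.
Section Setting.
Context {R : rcfType}.

Lemma At_sym {n m} {A : 'M[R]_n} {A2 : 'M[R]_m} : spd A -> spsd A2 -> sym_mx (Atilde A A2).
Proof. by move=> [hA _] [hA2 _]; rewrite /sym_mx /Atilde tr_block_mx !trmx0 hA hA2. Qed.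

Lemma At_psd {n m} {A : 'M[R]_n} {A2 : 'M[R]_m} : spd A -> spsd A2 ->
  forall x, 0 <= bform x (Atilde A A2) x.
Proof.
move=> hA [_ hA2] x; rewrite -[x]vsubmxK /bform tr_col_mx /Atilde mul_row_block.
rewrite !mulmx0 ?mul0mx !addr0 ?add0r mul_row_col mxE.
by apply: addr_ge0; [exact: spd_psd| exact: hA2].
Qed.

Lemma B_free n m l (C : 'M[R]_(l, n)) (C2 : 'M[R]_(l, m)) : \rank C = l -> row_free (Bmat C C2).
Proof.
move=> hC; rewrite /row_free; apply/eqP/anti_leq; rewrite rank_leq_row /=.
have e : Bmat C C2 *m col_mx 1%:M 0 = C by rewrite /Bmat mul_row_col mulmx1 mulmx0 addr0.
by have := mxrankM_maxl (Bmat C C2) (col_mx 1%:M 0); rewrite e hC.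
Qed.

Lemma G_sym {N l} (B : 'M[R]_(l, N)) {W} : spd W -> sym_mx (B^T *m invmx W *m B).
Proof. by move=> [hW _]; rewrite /sym_mx !trmx_mul trmxK trmx_inv hW mulmxA. Qed.

Lemma G_psd {N l} (B : 'M[R]_(l, N)) {W} : spd W -> forall x, 0 <= bform x (B^T *m invmx W *m B) x.
Proof. by move=> hW x; rewrite bformM; apply: spd_psd; exact: spd_inv. Qed.

Lemma Ag_spd n m l (A : 'M[R]_n) (A2 : 'M[R]_m) (C : 'M[R]_(l, n)) (C2 : 'M[R]_(l, m))
  (W : 'M[R]_l) (gamma : R) :
  spd A -> spsd A2 ->
  (forall x : 'cV[R]_(n + m), Atilde A A2 *m x = 0 -> Bmat C C2 *m x = 0 -> x = 0) ->
  0 < gamma -> spd W -> spd (Agamma (Atilde A A2) (Bmat C C2) W gamma).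
Proof.
move=> hA hA2 hker hg hW; split.
  rewrite /sym_mx /Agamma linearD /= linearZ /=.
  by rewrite (At_sym hA hA2) (G_sym _ hW).
move=> x xn0; rewrite /Agamma bformD bformZ.
have h1 := At_psd hA hA2 x; have h2 := G_psd (Bmat C C2) hW x.
rewrite lt_def (addr_ge0 h1 (mulr_ge0 (ltW hg) h2)) andbT.
apply: contra xn0 => /eqP hs.
have e1 : bform x (Atilde A A2) x = 0.
  apply/eqP; rewrite eq_le h1 andbT; have := mulr_ge0 (ltW hg) h2; lra.
have e2 : bform x ((Bmat C C2)^T *m invmx W *m Bmat C C2) x = 0.
  apply/eqP; rewrite eq_le h2 andbT; have : gamma * bform x ((Bmat C C2)^T *m invmx W *m Bmat C C2) x <= 0 by lra.
  by rewrite pmulr_rle0.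
apply/eqP; apply: hker.
  by apply: psd_zero e1; [exact: At_sym| exact: At_psd].
move: e2; rewrite bformM; apply: contra_eq => hb.
by have [_ hp] := spd_inv hW; rewrite gt_eqF // hp.
Qed.

End Setting.
Lemma charpoly_div (F : fieldType) N l (Ag : 'M[F]_N) (Bt : 'M[F]_(N, l)) (B : 'M[F]_(l, N))
  (Wg : 'M[F]_l) :
  block_mx Ag Bt 0 Wg \in unitmx ->
  ('X - 1%:P) ^+ N %| char_poly (invmx (block_mx Ag Bt 0 Wg) *m block_mx Ag Bt B 0).
Proof.
set P := block_mx Ag Bt 0 Wg; set A' := block_mx Ag Bt B 0 => hP.
set M := invmx P *m A'.
have hPM : P *m M = A' by rewrite /M mulKVmx.
have e : map_mx polyC P *m char_poly_mx M = 'X *: map_mx polyC P - map_mx polyC A'.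
  by rewrite /char_poly_mx mulmxBr mul_mx_scalar -map_mxM hPM.
have e2 : 'X *: map_mx polyC P - map_mx polyC A' =
   block_mx (('X - 1)%:M) 0 0 1%:M *m
   block_mx (map_mx polyC Ag) (map_mx polyC Bt) (- map_mx polyC B) ('X *: map_mx polyC Wg).
  rewrite /P /A' !map_block_mx scale_block_mx opp_block_mx add_block_mx mulmx_block.
  rewrite !map_mx0 !mul0mx !mul1mx !scaler0 !add0r !addr0 ?subr0 ?sub0r.
  by rewrite ?mul_scalar_mx ?scalerBl ?scale1r.
have := congr1 determinant e; rewrite det_mulmx e2 det_mulmx det_ublock det_scalar det1 mulr1.
rewrite det_map_mx /= mul_polyC -/(char_poly M) => e3.
have hd : \det P != 0 by rewrite -unitfE -unitmxE.
by rewrite -(dvdpZr _ _ hd) e3 dvdp_mulr.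
Qed.
Section Cplx.
Local Open Scope complex_scope.
Context {R : rcfType}.
Local Notation K := (R[i]).
Local Notation rc := (real_complex R).
Local Notation ii := (Complex (0 : R) 1).

Definition cm {p q} (X : 'M[R]_(p, q)) : 'M[K]_(p, q) := map_mx rc X.
Definition hb {k} (x y : 'rV[K]_k) (S : 'M[K]_k) : K := (x *m S *m y^T) 0 0.

Lemma hbDl {k} (x1 x2 y : 'rV[K]_k) S : hb (x1 + x2) y S = hb x1 y S + hb x2 y S.
Proof. by rewrite /hb !mulmxDl mxE. Qed.
Lemma hbDr {k} (x y1 y2 : 'rV[K]_k) S : hb x (y1 + y2) S = hb x y1 S + hb x y2 S.
Proof. by rewrite /hb linearD /= mulmxDr mxE. Qed.
Lemma hbZl {k} (x y : 'rV[K]_k) a S : hb (a *: x) y S = a * hb x y S.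
Proof. by rewrite /hb -!scalemxAl mxE. Qed.
Lemma hbZr {k} (x y : 'rV[K]_k) a S : hb x (a *: y) S = a * hb x y S.
Proof. by rewrite /hb linearZ /= -scalemxAr mxE. Qed.
Lemma hb_real {k} (a b : 'rV[R]_k) S : hb (cm a) (cm b) (cm S) = ((a *m S *m b^T) 0 0)%:C.
Proof. by rewrite /hb /cm map_trmx -!map_mxM mxE. Qed.

Lemma xsplit {p q} (x : 'M[K]_(p, q)) : x = cm (map_mx (@complex.Re R) x) + ii *: cm (map_mx (@complex.Im R) x).
Proof. by apply/matrixP => i j; rewrite !mxE {1}[x i j]complexE. Qed.

Lemma xcsplit {p q} (x : 'M[K]_(p, q)) :
  map_mx conjc x = cm (map_mx (@complex.Re R) x) + (- ii) *: cm (map_mx (@complex.Im R) x).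
Proof.
apply/matrixP => i j; rewrite !mxE; case: (x i j) => a b /=.
by apply/eqP; rewrite eq_complex /=; apply/andP; split; apply/eqP; ring.
Qed.

Lemma hf_split {k} (x : 'rV[K]_k) (S : 'M[R]_k) : sym_mx S ->
  hb x (map_mx conjc x) (cm S) =
  (bform (map_mx (@complex.Re R) x)^T S (map_mx (@complex.Re R) x)^T + bform (map_mx (@complex.Im R) x)^T S (map_mx (@complex.Im R) x)^T)%:C.
Proof.
move=> hS; rewrite xcsplit {1}[x]xsplit.
rewrite hbDl !hbDr !hbZl !hbZr !hb_real /bform !trmxK.
set a := map_mx (@complex.Re R) x; set b := map_mx (@complex.Im R) x.
have hab : (a *m S *m b^T) 0 0 = (b *m S *m a^T) 0 0.
  by have := bform_sym a^T b^T S hS; rewrite /bform !trmxK.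
rewrite hab.
set p := (a *m S *m a^T) 0 0; set q := (b *m S *m a^T) 0 0; set r := (b *m S *m b^T) 0 0.
apply/eqP; rewrite eq_complex /=; apply/andP; split; apply/eqP; ring.
Qed.

End Cplx.
Section Main.
Local Open Scope complex_scope.
Context {R : rcfType}.
Local Notation K := (R[i]).
Local Notation ii := (Complex (0 : R) 1).

Lemma scal00 {p q} (a : K) (M : 'M[K]_(p.+1, q.+1)) : (a *: M) 0 0 = a * M 0 0.
Proof. by rewrite mxE. Qed.

Lemma conj_cm {p q} (X : 'M[R]_(p, q)) : map_mx conjc (cm X) = cm X.
Proof. by apply/matrixP => i j; rewrite !mxE conjc_real. Qed.

Lemma cm_inj0 {p q} (X : 'M[R]_(p, q)) : cm X = 0 -> X = 0.
Proof.
move=> h; apply/matrixP => i j; have := congr1 (fun M : 'M[K]_(p, q) => M i j) h.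
by rewrite !mxE => -[].
Qed.

Lemma eig_main N l (At : 'M[R]_N) (B : 'M[R]_(l, N)) (W : 'M[R]_l) (gamma eta : R)
  (hAts : sym_mx At) (hAtp : forall x, 0 <= bform x At x)
  (hB : row_free B) (hg : 0 < gamma) (hW : spd W)
  (hAg : spd (Agamma At B W gamma))
  (heta : is_eta At B W gamma eta) (z : K) :
  eigenvalue (cm (invmx (calP At B W gamma) *m calA At B W gamma)) z ->
  complex.Im z = 0 /\ 0 < complex.Re z /\ eta <= complex.Re z /\ complex.Re z <= 1.
Proof.
set G := B^T *m invmx W *m B.
set Ag := Agamma At B W gamma.
have hAgG : Ag = At + gamma *: G by [].
have hGs : sym_mx G := G_sym B hW.
have hGp : forall x, 0 <= bform x G x := G_psd B hW.
have hqAg : forall r, bform r Ag r = bform r At r + gamma * bform r G r.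
  by move=> r; rewrite hAgG bformD bformZ.
have hWu : W \in unitmx := spd_unit hW.
set Wg := - gamma^-1 *: W.
have hgu : (- gamma^-1) \is a GRing.unit by rewrite unitrN unitrV unitfE gt_eqF.
have hWgu : Wg \in unitmx by rewrite unitmxZ.
have hAgu : Ag \in unitmx := spd_unit hAg.
have hPu : calP At B W gamma \in unitmx.
  by rewrite unitmxE /calP det_ublock unitrM -!unitmxE hAgu hWgu.
have invWg : B^T *m invmx Wg *m B = (- gamma) *: G.
  by rewrite invmxZ // invrN invrK -scalemxAr -scalemxAl.
have hqeta : forall r, inS At B r -> eta * bform r Ag r <= gamma * bform r G r.
  move=> r hr; have [->|rn0] := eqVneq r 0; first by rewrite !bform0 !mulr0.
  have hpos := hAg.2 r rn0.
  have := heta.2 r hr rn0; rewrite /eta_ratio -hqAg -/G ler_pdivlMr //.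
have eta1 : eta <= 1.
  have [x0 [_ x0n0] <-] := heta.1.
  have hpos := hAg.2 x0 x0n0.
  rewrite /eta_ratio -hqAg -/G ler_pdivrMr // mul1r hqAg lerDr; exact: hAtp.
move=> /eigenvalueP [v hv vn0].
have hcP : cm (calP At B W gamma) \in unitmx by rewrite map_unitmx.
have eM : cm (invmx (calP At B W gamma) *m calA At B W gamma) =
    invmx (cm (calP At B W gamma)) *m cm (calA At B W gamma).
  by rewrite /cm map_mxM map_invmx.
set w := v *m invmx (cm (calP At B W gamma)).
have hvw : v = w *m cm (calP At B W gamma) by rewrite /w mulmxKV.
have hw : w *m cm (calA At B W gamma) = z *: (w *m cm (calP At B W gamma)).
  by rewrite -hvw -hv eM /w mulmxA.
have ecP : cm (calP At B W gamma) = block_mx (cm Ag) (cm B)^T 0 (cm Wg).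
  by rewrite /cm /calP map_block_mx map_trmx map_mx0.
have ecA : cm (calA At B W gamma) = block_mx (cm Ag) (cm B)^T (cm B) 0.
  by rewrite /cm /calA map_block_mx map_trmx map_mx0.
set x := lsubmx w; set y := rsubmx w.
have ew : w = row_mx x y by rewrite hsubmxK.
move: hw; rewrite ecP ecA ew !mul_row_block !mulmx0 !addr0 scale_row_mx => /eq_row_mx [e1 e2].
have vnz : x = 0 -> y = 0 -> False.
  by move=> x0 y0; move/eqP: vn0; apply; rewrite hvw ew x0 y0 row_mx0 mul0mx.
set a := map_mx (@complex.Re R) x; set b := map_mx (@complex.Im R) x.
have hfAg : hb x (map_mx conjc x) (cm Ag) = (bform a^T Ag a^T + bform b^T Ag b^T)%:C.
  exact: hf_split x _ hAg.1.
have hDpos : x != 0 -> 0 < bform a^T Ag a^T + bform b^T Ag b^T.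
  move=> xn0; have [a0|an0] := eqVneq a^T 0.
    have [b0|bn0] := eqVneq b^T 0.
      exfalso; move/eqP: xn0; apply; rewrite [x]xsplit -/a -/b.
      move/eqP: a0; rewrite trmx_eq0 => /eqP ->; move/eqP: b0; rewrite trmx_eq0 => /eqP ->.
      by rewrite /cm map_mx0 scaler0 addr0.
    by rewrite a0 bform0 add0r; exact: hAg.2.
  by have := hAg.2 _ an0; have := spd_psd _ hAg b^T; lra.
have [z1|zn1] := eqVneq z 1.
  by rewrite z1 /=; split; first done; split; first exact: ltr01; split.
have hcBf : row_free (cm B) by rewrite /row_free /cm mxrank_map.
have [z0|zn0] := eqVneq z 0.
  move: e1 e2; rewrite z0 !scale0r => e1 e2.
  have hx0 : x = 0.
    apply/eqP; apply: contraT => xn0; have := hDpos xn0.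
    have : hb x (map_mx conjc x) (cm Ag) = 0.
      rewrite /hb.
      have -> : x *m cm Ag = - (y *m cm B) by apply/eqP; rewrite -addr_eq0 e1.
      rewrite mulNmx -mulmxA.
      have e : map_mx conjc x *m (cm B)^T = 0.
        rewrite (_ : (cm B)^T = map_mx conjc ((cm B)^T)); last by rewrite /cm map_trmx conj_cm.
        by rewrite -map_mxM e2 map_mx0.
      have -> : cm B *m (map_mx conjc x)^T = 0 by rewrite -[cm B]trmxK -trmx_mul e trmx0.
      by rewrite mulmx0 oppr0 mxE.
    by rewrite hfAg => /(congr1 (@complex.Re R)) /= ->; rewrite ltxx.
  have hy0 : y = 0.
    by move: e1; rewrite hx0 mul0mx add0r => /eqP; rewrite mulmx_free_eq0 // => /eqP.
  by case: (vnz hx0 hy0).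
have hcWg : cm Wg \in unitmx by rewrite map_unitmx.
have hx0 : x != 0.
  apply/eqP => hx0; apply: (vnz hx0).
  move: e2; rewrite hx0 !mul0mx add0r => /esym/eqP.
  rewrite scaler_eq0 (negbTE zn0) /= mulmx_free_eq0 ?row_free_unit // => /eqP //.
have h2 : y *m cm Wg = ((1 - z) / z) *: (x *m (cm B)^T).
  have h : z *: (y *m cm Wg) = (1 - z) *: (x *m (cm B)^T).
    by rewrite scalerBl scale1r {1}e2 scalerDr addrAC subrr add0r.
  apply: (scalerI zn0); rewrite h scalerA; congr (_ *: _).
  by rewrite mulrCA mulfV // mulr1.
have hy : y = ((1 - z) / z) *: (x *m (cm B)^T *m invmx (cm Wg)).
  by rewrite scalemxAl -h2 mulmxK.
have hyB : y *m cm B = (- ((1 - z) / z * gamma%:C)) *: (x *m cm G).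
  rewrite hy -scalemxAl -!mulmxA.
  have -> : (cm B)^T *m (invmx (cm Wg) *m cm B) = (- gamma)%:C *: cm G.
    by rewrite /cm map_trmx -map_invmx -!map_mxM mulmxA invWg map_mxZ.
  by rewrite -scalemxAr scalerA rmorphN /= mulrN.
have hstar : z *: (x *m cm Ag) = gamma%:C *: (x *m cm G).
  have h1 : (1 - z) *: (x *m cm Ag) = ((1 - z) / z * gamma%:C) *: (x *m cm G).
    by rewrite scalerBl scale1r -e1 opprD addrA subrr add0r hyB scaleNr opprK.
  have hz1 : 1 - z != 0 by rewrite subr_eq0 eq_sym.
  apply: (scalerI hz1); rewrite scalerA mulrC -scalerA h1 !scalerA; congr (_ *: _).
  by field.
have hfG : hb x (map_mx conjc x) (cm G) = (bform a^T G a^T + bform b^T G b^T)%:C.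
  exact: hf_split x _ hGs.
have hzD : z * (bform a^T Ag a^T + bform b^T Ag b^T)%:C =
           (gamma * (bform a^T G a^T + bform b^T G b^T))%:C.
  have := congr1 (fun M => (M *m (map_mx conjc x)^T) 0 0) hstar.
  rewrite /= -!scalemxAl !scal00; rewrite /hb in hfAg hfG; rewrite hfAg hfG => ->.
  by rewrite rmorphM.
set DA := bform a^T Ag a^T + bform b^T Ag b^T in hzD hDpos.
set DG := bform a^T G a^T + bform b^T G b^T in hzD.
have hDA := hDpos hx0.
have hz : z = ((gamma * DG) / DA)%:C.
  have hDAc : DA%:C != 0 by apply/eqP => /complexI /eqP; rewrite gt_eqF.
  by apply: (mulIf hDAc); rewrite hzD -rmorphM mulfVK // gt_eqF.
have hS : forall u : 'cV[R]_N, B *m u = 0 -> x *m cm (At *m u) = 0.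
  move=> u hu.
  have hGu : G *m u = 0 by rewrite /G -mulmxA hu mulmx0.
  have := congr1 (fun M => M *m cm u) hstar; rewrite /= -!scalemxAl -!mulmxA /cm -!map_mxM.
  rewrite hGu map_mx0 mulmx0 scaler0 hAgG mulmxDl -scalemxAl hGu scaler0 addr0 => /eqP.
  by rewrite scaler_eq0 (negbTE zn0) => /eqP.
have hab : forall u, B *m u = 0 -> bform u At a^T = 0 /\ bform u At b^T = 0.
  move=> u hu; have := hS u hu; rewrite [x]xsplit -/a -/b mulmxDl -scalemxAl /cm -!map_mxM.
  set p := a *m (At *m u); set q := b *m (At *m u).
  move=> /(congr1 (fun M : 'M[K]_(1, 1) => M 0 0)); rewrite !mxE => /eqP.
  rewrite eq_complex /= ?mul0r ?mul1r ?mulr0 ?subr0 ?addr0 ?add0r => /andP [/eqP hp /eqP hq].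
  rewrite !(bform_sym u _ At hAts) /bform !trmxK -!mulmxA.
  by rewrite [(a *m _) 0 0]mxE [(b *m _) 0 0]mxE; split.
have ha : inS At B a^T by move=> u hu; exact: (hab u hu).1.
have hb' : inS At B b^T by move=> u hu; exact: (hab u hu).2.
have ea := hqeta _ ha; have eb := hqeta _ hb'.
have hGD : 0 <= DG by rewrite /DG; apply: addr_ge0; exact: hGp.
have hGDp : 0 < gamma * DG.
  rewrite lt_def mulr_ge0 ?(ltW hg) // andbT.
  by apply: contra zn0 => /eqP h; rewrite hz h mul0r.
rewrite hz /=; split; first done.
split; first exact: divr_gt0.
split.
  rewrite ler_pdivlMr // /DA /DG; lra.
rewrite ler_pdivrMr // mul1r /DA /DG !hqAg.
have := hAtp a^T; have := hAtp b^T; lra.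
Qed.
End Main.

Theorem mainTheorem1 (R : rcfType) (n m l : nat)
  (A : 'M[R]_n) (A2 : 'M[R]_m) (C : 'M[R]_(l, n)) (C2 : 'M[R]_(l, m))
  (W : 'M[R]_l) (gamma eta : R)
  (* standing facts of the setting *)
  (hA : spd A)
  (hA2 : spsd A2)
  (hA2ker : forall x : 'cV[R]_m, A2 *m x = 0 <-> exists c : R, x = const_mx c)
  (hC : \rank C = l)
  (hker : forall x : 'cV[R]_(n + m),
      Atilde A A2 *m x = 0 -> Bmat C C2 *m x = 0 -> x = 0)
  (hsaddle : block_mx (Atilde A A2) (Bmat C C2)^T (Bmat C C2) 0 \in unitmx)
  (* hypotheses of the theorem *)
  (hgamma : 0 < gamma)
  (hW : spd W)
  (heta : is_eta (Atilde A A2) (Bmat C C2) W gamma eta) :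
  let M := invmx (calP (Atilde A A2) (Bmat C C2) W gamma)
           *m calA (Atilde A A2) (Bmat C C2) W gamma in
  (forall z : R[i], eigenvalue (cplx_mx M) z ->
      complex.Im z = 0 /\ 0 < complex.Re z /\ eta <= complex.Re z /\ complex.Re z <= 1)
  /\ ('X - 1%:P) ^+ (n + m) %| char_poly M.
Proof.
move=> M.
have hAg := @Ag_spd _ _ _ _ _ _ C C2 _ _ hA hA2 hker hgamma hW.
split.
  move=> z hz.
  exact: (@eig_main _ _ _ _ _ _ _ _ (At_sym hA hA2) (At_psd hA hA2) (@B_free _ _ _ _ C C2 hC)
            hgamma hW hAg heta z hz).
rewrite /M /calP /calA; apply: charpoly_div.
have hgu : (- gamma^-1) \is a GRing.unit by rewrite unitrN unitrV unitfE gt_eqF.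
rewrite unitmxE det_ublock unitrM -!unitmxE (spd_unit hAg) /=.
by rewrite unitmxZ // (spd_unit hW).
Qed.
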